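(* (Generalized Artin's Lemma.) Let $G$ be a profinite group acting faithfully by automorphisms on a field $h$, such that for every $x\in h$ the stabilizer $S(x)=\{\sigma\in G:\sigma(x)=x\}$ is an open subgroup of $G$. Let $k=h^G$ be the subfield of $h$ of elements fixed by all of $G$. If $h/k$ is an outer extension, then $h/k$ is algebraic and Galois, and the action identifies $G$ with $\mathrm{Gal}(h/k)$ (i.e. $\mathrm{Gal}(h/k)=G$).
   Context: ''Field'' means a not necessarily commutative division ring. For a field extension $h/k$ and $x\in h$, $x$ is algebraic over $k$ if the subfield $k(x)$ generated by $k$ and $x$ is finite-dimensional both as a left and a right $k$-vector space; $h/k$ is algebraic if all elements of $h$ are algebraic over $k$. $h/k$ is outer if the only inner automorphism of $h$ fixing $k$ pointwise is the identity. $\mathrm{Gal}(h/k)$ is the group of automorphisms of $h$ fixing $k$ pointwise, and $h/k$ is Galois if the subfield of $h$ fixed by $\mathrm{Gal}(h/k)$ is $k$. *)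

(* Defs.v *)
From HB Require Import structures.
From mathcomp Require Import all_boot all_order all_algebra.
From mathcomp Require Import all_classical topology.
Set Implicit Arguments. Unset Strict Implicit. Unset Printing Implicit Defensive.
Import Order.TTheory GRing.Theory.
Local Open Scope classical_set_scope.
Local Open Scope ring_scope.

(** "Field" = (not necessarily commutative) division ring: a unit ring
    (nontrivial, 1 != 0) in which every nonzero element is invertible. *)
Definition is_division_ring (h : unitRingType) : Prop :=
  forall x : h, x != 0 -> x \is a GRing.unit.

Definition is_subfield (h : unitRingType) (S : set h) : Prop :=
  [/\ S 0, S 1,
      (forall a b, S a -> S b -> S (a - b)),
      (forall a b, S a -> S b -> S (a * b)) &
      (forall a, S a -> a != 0 -> S a^-1)].

Definition gen_subfield (h : unitRingType) (k : set h) (x : h) : set h :=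
  [set y | forall S : set h, is_subfield S -> k `<=` S -> S x -> S y].

Definition left_findim (h : unitRingType) (k V : set h) : Prop :=
  exists s : seq h, (forall v, v \in s -> V v) /\
    forall y, V y -> exists c : 'I_(size s) -> h,
      (forall i, k (c i)) /\ y = \sum_(i < size s) c i * s`_i.

Definition right_findim (h : unitRingType) (k V : set h) : Prop :=
  exists s : seq h, (forall v, v \in s -> V v) /\
    forall y, V y -> exists c : 'I_(size s) -> h,
      (forall i, k (c i)) /\ y = \sum_(i < size s) s`_i * c i.

Definition algebraic_over (h : unitRingType) (k : set h) (x : h) : Prop :=
  left_findim k (gen_subfield k x) /\ right_findim k (gen_subfield k x).

Definition algebraic_ext (h : unitRingType) (k : set h) : Prop :=
  forall x : h, algebraic_over k x.

Definition is_ring_aut (h : unitRingType) (s : h -> h) : Prop :=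
  [/\ (forall a b, s (a + b) = s a + s b),
      (forall a b, s (a * b) = s a * s b),
      s 1 = 1 & bijective s].

Definition in_Gal (h : unitRingType) (k : set h) (s : h -> h) : Prop :=
  is_ring_aut s /\ (forall a, k a -> s a = a).

Definition outer_ext (h : unitRingType) (k : set h) : Prop :=
  forall u : h, u \is a GRing.unit ->
    (forall a, k a -> u * a * u^-1 = a) -> forall y, u * y * u^-1 = y.

Definition galois_ext (h : unitRingType) (k : set h) : Prop :=
  [set y | forall s, in_Gal k s -> s y = y] = k.

Definition is_profinite_group (G : topologicalType)
  (mul : G -> G -> G) (inv : G -> G) (e : G) : Prop :=
  [/\ (forall a b c, mul a (mul b c) = mul (mul a b) c),
      (forall a, mul e a = a /\ mul a e = a) &
      (forall a, mul (inv a) a = e /\ mul a (inv a) = e)] /\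
  [/\ continuous (fun p : G * G => mul p.1 p.2),
      continuous inv,
      compact [set: G], hausdorff_space G & totally_disconnected [set: G]].

Definition faithful_aut_action (G : Type) (mul : G -> G -> G) (e : G)
  (h : unitRingType) (act : G -> h -> h) : Prop :=
  [/\ (forall g, is_ring_aut (act g)),
      (forall x, act e x = x),
      (forall g g' x, act (mul g g') x = act g (act g' x)) &
      (forall g, (forall x, act g x = x) -> g = e)].

Definition stabilizer (G : Type) (h : Type) (act : G -> h -> h) (x : h) : set G :=
  [set g | act g x = x].

Definition fixed_set (G : Type) (h : Type) (act : G -> h -> h) : set h :=
  [set x | forall g, act g x = x].

(* Main.v *)
Require Import Defs.
From HB Require Import structures.
From mathcomp Require Import all_boot all_order all_algebra.
From mathcomp Require Import all_classical topology finmap.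
Set Implicit Arguments. Unset Strict Implicit. Unset Printing Implicit Defensive.
Import GRing.Theory.
Local Open Scope classical_set_scope.
Local Open Scope ring_scope.

Definition vecf (R : unitRingType) n (s : 'I_n -> R -> R) (r : seq (R * R)) (i : 'I_n) : R :=
  \sum_(p <- r) p.1 * s i p.2.

Lemma vecf_scal (R : unitRingType) n (s : 'I_n -> R -> R) r c i :
  vecf s [seq (c * p.1, p.2) | p <- r] i = c * vecf s r i.
Proof. by rewrite /vecf big_map mulr_sumr; apply: eq_bigr => p _ /=; rewrite mulrA. Qed.

Lemma vecf_sub (R : unitRingType) n (s : 'I_n -> R -> R) r1 r2 i :
  vecf s (r1 ++ [seq (- p.1, p.2) | p <- r2]) i = vecf s r1 i - vecf s r2 i.
Proof.
rewrite /vecf big_cat big_map /= -sumrN; congr (_ + _).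
by apply: eq_bigr => p _; rewrite mulNr.
Qed.

Lemma vecf_rdiag (R : unitRingType) n (s : 'I_n -> R -> R) (L : set R) r a i :
  (forall a b, L a -> L b -> s i (a * b) = s i a * s i b) ->
  (forall p, p \in r -> L p.2) -> L a ->
  vecf s [seq (p.1, p.2 * a) | p <- r] i = vecf s r i * s i a.
Proof.
move=> sM rL La; rewrite /vecf big_map mulr_suml big_seq_cond [RHS]big_seq_cond.
by apply: eq_bigr => p /andP[pr _] /=; rewrite sM ?mulrA //; exact: rL.
Qed.

Lemma delta_exists (R : unitRingType) (divR : is_division_ring R) n
  (s : 'I_n -> R -> R) (L : set R) (m : 'I_n) :
  L 1 -> (forall a b, L a -> L b -> L (a * b)) ->
  (forall i a b, L a -> L b -> s i (a * b) = s i a * s i b) ->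
  (forall i, s i 1 = 1) ->
  (forall i, i != m -> forall c : R, c != 0 -> exists a, L a /\ c * s i a != s m a * c) ->
  exists r : seq (R * R), (forall p, p \in r -> L p.2) /\
    forall i, \sum_(p <- r) p.1 * s i p.2 = (i == m)%:R.
Proof.
move=> L1 LM sM s1 nin.
suff main : forall N r, (forall p, p \in r -> L p.2) -> vecf s r m = 1 ->
    (#|[pred i | vecf s r i != 0%R]| <= N)%N ->
    exists r : seq (R * R), (forall p, p \in r -> L p.2) /\
      forall i, vecf s r i = (i == m)%:R.
  have H1 : forall p, p \in [:: ((1 : R), (1 : R))] -> L p.2.
    by move=> p; rewrite mem_seq1 => /eqP -> /=.
  have H2 : vecf s [:: ((1 : R), (1 : R))] m = 1 by rewrite /vecf big_seq1 /= s1 mulr1.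
  have H3 : (#|[pred i | vecf s [:: ((1%R : R), (1%R : R))] i != 0%R]| <= n)%N.
    by apply: leq_trans (max_card _) _; rewrite card_ord.
  have [r [rL rv]] := main n _ H1 H2 H3.
  by exists r.
elim=> [|N IH] r rL rm.
  rewrite leqn0 => /eqP/card0_eq/(_ m); rewrite !inE rm oner_eq0 //.
move=> rN.
have [/existsP [i /andP [im vi]]|] := boolP [exists i, (i != m) && (vecf s r i != 0)]; last first.
  move=> /existsPn H; exists r; split=> // i.
  have [-> //|im] := eqVneq i m.
  by have := H i; rewrite im /= negbK => /eqP ->.
have [a [La Ha]] := nin i im _ vi.
set r1 := [seq (p.1, p.2 * a) | p <- r] ++ [seq (- p.1, p.2) | p <- [seq (s m a * p.1, p.2) | p <- r]].
have r1L : forall p, p \in r1 -> L p.2.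
  move=> p; rewrite mem_cat => /orP [/mapP [q qr ->]|/mapP [q /mapP [q' q'r ->] ->]] /=;
    by [apply: LM; [apply: rL|]|apply: rL].
have r1v : forall j, vecf s r1 j = vecf s r j * s j a - s m a * vecf s r j.
  by move=> j; rewrite vecf_sub vecf_scal (vecf_rdiag (sM j) rL La).
have r1i : vecf s r1 i != 0 by rewrite r1v subr_eq0.
have r1i_u : vecf s r1 i \is a GRing.unit by apply: divR.
set c := vecf s r i * (vecf s r1 i)^-1.
set r2 := r ++ [seq (- p.1, p.2) | p <- [seq (c * p.1, p.2) | p <- r1]].
have r2v : forall j, vecf s r2 j = vecf s r j - c * vecf s r1 j.
  by move=> j; rewrite vecf_sub vecf_scal.
apply: (IH r2).
- move=> p; rewrite mem_cat => /orP [/rL //|/mapP [q /mapP [q' q'r ->] ->]] /=.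
  exact: r1L.
- by rewrite r2v r1v rm mulr1 mul1r subrr mulr0 subr0.
- rewrite -ltnS; apply: leq_trans rN; apply: proper_card; apply/properP; split.
    apply/fintype.subsetP => j; rewrite !inE; apply: contraNN => /eqP vj.
    by rewrite r2v r1v vj mul0r mulr0 subrr mulr0 subrr.
  exists i; rewrite !inE // r2v /c -mulrA mulVr // mulr1 subrr eqxx //.
Qed.

Fixpoint inspan (R : unitRingType) (k : set R) (ws : seq R) (y : R) : Prop :=
  match ws with
  | [::] => y = 0
  | w :: ws' => exists c, k c /\ inspan k ws' (y - c * w)
  end.

Lemma inspan0 (R : unitRingType) (k : set R) ws : k 0 -> inspan k ws 0.
Proof. by move=> k0; elim: ws => //= w ws IH; exists 0; rewrite mul0r subr0. Qed.

Lemma inspanB (R : unitRingType) (k : set R) ws a b :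
  (forall x y, k x -> k y -> k (x - y)) ->
  inspan k ws a -> inspan k ws b -> inspan k ws (a - b).
Proof.
move=> kB; elim: ws a b => [|w ws IH] a b /=; first by move=> -> ->; rewrite subr0.
move=> [ca [kca Ha]] [cb [kcb Hb]]; exists (ca - cb); split; first exact: kB.
have -> : a - b - (ca - cb) * w = (a - ca * w) - (b - cb * w).
  by rewrite mulrBl !opprD !opprK addrACA.
exact: IH.
Qed.

Lemma inspanM (R : unitRingType) (k : set R) ws c a :
  (forall x y, k x -> k y -> k (x * y)) -> k c ->
  inspan k ws a -> inspan k ws (c * a).
Proof.
move=> kM kc; elim: ws a => [|w ws IH] a /=; first by move=> ->; rewrite mulr0.
move=> [ca [kca Ha]]; exists (c * ca); split; first exact: kM.
by rewrite -mulrA -mulrBr; apply: IH.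
Qed.

Lemma inspan_sum (R : unitRingType) (k : set R) ws y : k 0 -> inspan k ws y ->
  exists c : 'I_(size ws) -> R, (forall i, k (c i)) /\ y = \sum_(i < size ws) c i * ws`_i.
Proof.
move=> k0; elim: ws y => [|w ws IH] y /=.
  by move=> ->; exists (fun _ => 0); split => //; rewrite big_ord0.
move=> [c0 [kc0 /IH [c' [kc' Hc']]]].
exists (fun i : 'I_(size ws).+1 => if unlift ord0 i is Some j then c' j else c0).
split.
  by move=> i; case: (unlift ord0 i).
rewrite big_ord_recl /= unlift_none.
under eq_bigr => i _ do rewrite liftK.
by rewrite -Hc' addrC subrK.
Qed.

Lemma sum_inspan (R : unitRingType) (k : set R) (I : eqType) (r : seq I) (c : I -> R) (w : I -> R) :
  (forall i, i \in r -> k (c i)) ->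
  inspan k [seq w i | i <- r] (\sum_(i <- r) c i * w i).
Proof.
elim: r => [|i r IH] kc /=; first by rewrite big_nil.
exists (c i); split; first by apply: kc; rewrite inE eqxx.
rewrite big_cons [c i * w i + _]addrC addrK; apply: IH => j jr; apply: kc.
by rewrite inE jr orbT.
Qed.

Lemma sub_findim (R : unitRingType) (divR : is_division_ring R) (k : set R) ws :
  is_subfield k -> forall V : set R, V 0 -> (forall a b, V a -> V b -> V (a - b)) ->
  (forall c a, k c -> V a -> V (c * a)) ->
  (forall y, V y -> inspan k ws y) ->
  exists s : seq R, (forall v, v \in s -> V v) /\ forall y, V y -> inspan k s y.
Proof.
move=> [k0 k1 kB kM kV].
elim: ws => [|w ws IH] V V0 VB VM Vs.
  by exists [::]; split => // y /Vs.
pose V1 := [set y | V y /\ inspan k ws y].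
have [||||s1 [s1V s1s]] := IH V1.
- by split => //; exact: inspan0.
- by move=> a b [Va Ha] [Vb Hb]; split; [exact: VB|exact: inspanB].
- by move=> c a kc [Va Ha]; split; [exact: VM|exact: inspanM].
- by move=> y [].
have [[v0 [Vv0 nv0]]|] := pselect (exists v, V v /\ ~ inspan k ws v); last first.
  move=> H; exists s1; split; first by move=> v /s1V [].
  move=> y Vy; apply: s1s; split => //.
  by apply: contrapT => ny; apply: H; exists y.
have [c0 [kc0 H0]] : exists c, k c /\ inspan k ws (v0 - c * w) by exact: Vs.
have c0n : c0 != 0.
  by apply/eqP => c00; apply: nv0; move: H0; rewrite c00 mul0r subr0.
have c0u : c0 \is a GRing.unit by exact: divR.
exists (v0 :: s1); split.
  by move=> v; rewrite inE => /orP [/eqP ->|/s1V []].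
move=> y Vy /=.
have [cy [kcy Hy]] : exists c, k c /\ inspan k ws (y - c * w) by exact: Vs.
exists (cy * c0^-1); split; first exact/kM/kV.
apply: s1s; split; first by apply: VB => //; apply: VM => //; exact/kM/kV.
have -> : y - cy * c0^-1 * v0 = (y - cy * w) - (cy * c0^-1) * (v0 - c0 * w).
  have Hd : cy * c0^-1 * (c0 * w) = cy * w by rewrite mulrA -(mulrA cy) mulVr // mulr1.
  by rewrite mulrBr Hd opprB addrA subrK.
by apply: inspanB => //; apply: inspanM => //; exact/kM/kV.
Qed.

Lemma divR_c (R : unitRingType) : is_division_ring R -> is_division_ring R^c.
Proof. by move=> dR x; exact: dR. Qed.

Lemma delta_right (R : unitRingType) (divR : is_division_ring R) n
  (s : 'I_n -> R -> R) (L : set R) (m : 'I_n) :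
  L 1 -> (forall a b, L a -> L b -> L (a * b)) ->
  (forall i a b, L a -> L b -> s i (a * b) = s i a * s i b) ->
  (forall i, s i 1 = 1) ->
  (forall i, i != m -> forall c : R, c != 0 -> exists a, L a /\ s i a * c != c * s m a) ->
  exists r : seq (R * R), (forall p, p \in r -> L p.2) /\
    forall i, \sum_(p <- r) s i p.2 * p.1 = (i == m)%:R.
Proof.
move=> L1 LM sM s1 nin.
have := @delta_exists (R^c) (divR_c divR) n s L m L1.
case.
- by move=> a b La Lb; exact: LM.
- by move=> i a b La Lb; exact: sM.
- exact: s1.
- exact: nin.
by move=> r [rL rs]; exists r; split => // i; exact: rs.
Qed.

Lemma subfield_c (R : unitRingType) (k : set R) : is_subfield k -> is_subfield (k : set R^c).
Proof. by case=> k0 k1 kB kM kV; split => // a b ka kb; exact: kM. Qed.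

Fixpoint inspanr (R : unitRingType) (k : set R) (ws : seq R) (y : R) : Prop :=
  match ws with
  | [::] => y = 0
  | w :: ws' => exists c, k c /\ inspanr k ws' (y - w * c)
  end.

Lemma inspanrE (R : unitRingType) (k : set R) ws y : inspanr k ws y = inspan (k : set R^c) ws y.
Proof. by elim: ws y => //= w ws IH y; under eq_exists => c do rewrite IH. Qed.

Lemma transl_cont (G : topologicalType) (mul : G -> G -> G) (a : G) :
  continuous (fun p : G * G => mul p.1 p.2) -> continuous (fun y => mul a y).
Proof.
move=> mc x.
have -> : (fun y => mul a y) = (fun p : G * G => mul p.1 p.2) \o (fun y => (a, y)) by [].
apply: continuous_comp; last exact: mc.
exact: (cvg_pair (cvg_cst a) cvg_id).
Qed.

Lemma fip (T : topologicalType) (I : choiceType) (D : set I) (f : I -> set T) :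
  compact [set: T] -> (exists i, D i) -> (forall i, D i -> closed (f i)) ->
  finI D f -> \bigcap_(i in D) f i !=set0.
Proof.
move=> Aco [i Di] fcl finIf.
have [|p [_ clfinIfp]] := Aco _ (finI_filter finIf).
  by exists (f i) => //; exact: finI_from1.
exists p => j Dj; apply: fcl => // B Bp.
by apply: clfinIfp Bp; exists (f j) => //; exact: finI_from1.
Qed.


Lemma aut0 (h : unitRingType) (s : h -> h) : is_ring_aut s -> s 0 = 0.
Proof. by case=> sD _ _ _; have := sD 0 0; rewrite addr0 => H; apply: (addrI (s 0)); rewrite addr0 -H. Qed.

Lemma autN (h : unitRingType) (s : h -> h) a : is_ring_aut s -> s (- a) = - s a.
Proof.
move=> sa; have [sD _ _ _] := sa.
by apply: (addrI (s a)); rewrite -sD !subrr aut0.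
Qed.

Lemma autB (h : unitRingType) (s : h -> h) a b : is_ring_aut s -> s (a - b) = s a - s b.
Proof. by move=> sa; have [sD _ _ _] := sa; rewrite sD autN. Qed.

Lemma aut_inj (h : unitRingType) (s : h -> h) : is_ring_aut s -> injective s.
Proof. by case=> _ _ _ /bij_inj. Qed.

Lemma autV (h : unitRingType) (dR : is_division_ring h) (s : h -> h) a :
  is_ring_aut s -> s (a^-1) = (s a)^-1.
Proof.
move=> sa; have [sD sM s1 _] := sa.
have [->|a0] := eqVneq a 0; first by rewrite invr0 aut0 // invr0.
have au : a \is a GRing.unit by exact: dR.
have h1 : s a * s a^-1 = 1 by rewrite -sM mulrV.
have h2 : s a^-1 * s a = 1 by rewrite -sM mulVr.
have sau : s a \is a GRing.unit by apply/unitrP; exists (s a^-1).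
by apply: (mulrI sau); rewrite h1 mulrV.
Qed.

Lemma aut_sum (h : unitRingType) (s : h -> h) I (r : seq I) (F : I -> h) :
  is_ring_aut s -> s (\sum_(i <- r) F i) = \sum_(i <- r) s (F i).
Proof. by move=> sa; have [sD _ _ _] := sa; apply: (big_morph s sD (aut0 sa)). Qed.

Lemma act_facts (G : Type) (mul : G -> G -> G) (inv : G -> G) (e : G) (h : unitRingType)
  (act : G -> h -> h) :
  [/\ (forall a b c, mul a (mul b c) = mul (mul a b) c),
      (forall a, mul e a = a /\ mul a e = a) &
      (forall a, mul (inv a) a = e /\ mul a (inv a) = e)] ->
  faithful_aut_action mul e act ->
  (forall g x, act (inv g) (act g x) = x) /\ (forall g x, act g (act (inv g) x) = x).
Proof.
move=> [_ _ gV] [_ ae aM _]; split => g x; rewrite -aM; have [g1 g2] := gV g; rewrite ?g1 ?g2; exact: ae.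
Qed.

Lemma orbit_fin (G : topologicalType) (mul : G -> G -> G) (inv : G -> G) (e : G)
  (h : unitRingType) (act : G -> h -> h) :
  is_profinite_group mul inv e -> faithful_aut_action mul e act ->
  (forall x : h, open (stabilizer act x)) ->
  forall x, exists gs : seq G, forall g, exists2 g', g' \in gs & act g x = act g' x.
Proof.
move=> [Gax [mc _ Gc _ _]] FA So x.
have [aK Ka] := act_facts Gax FA.
have [_ _ aM _] := FA.
apply: contrapT => H.
have := @fip G G setT (fun g => ~` [set y | act y x = act g x]) Gc.
case.
- by exists e.
- move=> g _; apply: open_closedC.
  have -> : [set y | act y x = act g x] = (fun y => mul (inv g) y) @^-1` stabilizer act x.
    apply/seteqP; split => y /=; rewrite /stabilizer /= aM.
      by move=> ->; rewrite aK.
    by move=> H1; rewrite -(Ka g (act y x)) H1.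
  apply: open_comp (So x) => y _; exact: transl_cont.
- move=> D' _; apply: contrapT => H2; apply: H.
  exists (D' : seq G) => g; apply: contrapT => H3; apply: H2; exists g => g' /= g'D.
  by move=> H4; apply: H3; exists g'.
move=> y /(_ y I) /=; exact.
Qed.

Lemma orbit_closure (G : topologicalType) (mul : G -> G -> G) (inv : G -> G) (e : G)
  (h : unitRingType) (act : G -> h -> h) :
  is_profinite_group mul inv e -> faithful_aut_action mul e act ->
  (forall x : h, open (stabilizer act x)) ->
  forall X : seq h, exists O : seq h,
    (forall x, x \in X -> x \in O) /\ (forall g o, o \in O -> act g o \in O).
Proof.
move=> PG FA So; have [_ ae aM _] := FA.
elim=> [|x X [O' [XO' O'c]]]; first by exists [::].
have [gs Hgs] := orbit_fin PG FA So x.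
exists ([seq act g x | g <- gs] ++ O'); split.
  move=> y; rewrite inE => /orP [/eqP ->|/XO' yO]; last by rewrite mem_cat yO orbT.
  have [g' g'gs Hg'] := Hgs e; rewrite ae in Hg'.
  by rewrite mem_cat; apply/orP; left; apply/mapP; exists g'.
move=> g o; rewrite mem_cat => /orP [/mapP [g' g'gs ->]|/O'c oO]; last first.
  by rewrite mem_cat oO orbT.
have [g'' g''gs Hg''] := Hgs (mul g g'); rewrite -aM Hg''.
by rewrite mem_cat; apply/orP; left; apply/mapP; exists g''.
Qed.

Definition Lset (G : Type) (h : unitRingType) (act : G -> h -> h) (O : seq h) : set h :=
  [set y | forall s, (forall o, o \in O -> act s o = o) -> act s y = y].

Lemma reps (G : Type) (mul : G -> G -> G) (inv : G -> G) (e : G)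
  (h : unitRingType) (act : G -> h -> h) :
  [/\ (forall a b c, mul a (mul b c) = mul (mul a b) c),
      (forall a, mul e a = a /\ mul a e = a) &
      (forall a, mul (inv a) a = e /\ mul a (inv a) = e)] ->
  faithful_aut_action mul e act ->
  forall O : seq h, (forall g o, o \in O -> act g o \in O) ->
  exists n (T : 'I_n -> G),
    (forall g, exists i, forall y, Lset act O y -> act g y = act (T i) y) /\
    (forall i j, i != j -> exists y, Lset act O y /\ act (T i) y != act (T j) y).
Proof.
move=> Gax FA O Oc.
have [aK Ka] := act_facts Gax FA.
have [_ ae aM _] := FA.
pose m := size O.
pose code (g : G) : {ffun 'I_m -> 'I_m.+1} := [ffun i : 'I_m => inord (index (act g O`_i) O)].
have key1 : forall g g', code g = code g' -> forall y, Lset act O y -> act g y = act g' y.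
  move=> g g' cgg' y Ly.
  have agO : forall o, o \in O -> act g o = act g' o.
    move=> o oO; have im : (index o O < m)%N by rewrite index_mem.
    have := congr1 (fun f : {ffun 'I_m -> 'I_m.+1} => f (Ordinal im)) cgg'; rewrite !ffunE /= nth_index //.
    move=> /(congr1 (@nat_of_ord _)); rewrite !inordK ?ltnS ?index_size // => ei.
    by rewrite -(nth_index 0 (Oc g o oO)) ei nth_index // Oc.
  have H : act (mul (inv g) g') y = y.
    by apply: Ly => o oO; rewrite aM -agO // aK.
  by move: H; rewrite aM => H; rewrite -{1}H Ka.
have key2 : forall g g', code g != code g' -> exists y, Lset act O y /\ act g y != act g' y.
  move=> g g' /eqP cn.
  have [i ci] : exists i, code g i != code g' i.
    apply: contrapT => H; apply: cn; apply/ffunP => i.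
    by apply: contrapT => H1; apply: H; exists i; apply/eqP.
  exists O`_i; split.
    by move=> s Hs; apply: Hs; apply: mem_nth.
  by apply: contraNN ci; rewrite !ffunE => /eqP ->.
pose Im := finset (fun t : {ffun 'I_m -> 'I_m.+1} => `[< exists g, code g = t >]).
have /choice [T HT] : forall i : 'I_#|Im|, exists g, code g = enum_val i.
  by move=> i; have := enum_valP i; rewrite inE => /asboolP.
exists #|Im|, T; split.
  move=> g; have cI : code g \in Im by rewrite inE; apply/asboolP; exists g.
  exists (enum_rank_in cI (code g)); apply: key1.
  by rewrite HT enum_rankK_in.
move=> i j ij; apply: key2; rewrite !HT.
by apply: contraNN ij => /eqP /enum_val_inj ->.
Qed.

Lemma conj_eq (h : unitRingType) (dR : is_division_ring h) (k L : set h)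
  (outer : outer_ext k) (kL : k `<=` L) (f g : h -> h)
  (fk : forall a, k a -> f a = a) (gk : forall a, k a -> g a = a) (c : h) :
  c != 0 -> (forall a, L a -> c * f a = g a * c) -> forall a, L a -> f a = g a.
Proof.
move=> c0 H; have cu : c \is a GRing.unit by exact: dR.
have ck : forall a, k a -> c * a * c^-1 = a.
  move=> a ka; have := H a (kL a ka); rewrite fk // gk // => ->.
  by rewrite mulrK.
have oc := outer c cu ck.
by move=> a La; rewrite -(oc (f a)) H // mulrK.
Qed.

Lemma fixed_subfield (G : Type) (mul : G -> G -> G) (e : G) (h : unitRingType)
  (dR : is_division_ring h) (act : G -> h -> h) :
  faithful_aut_action mul e act -> is_subfield (fixed_set act).
Proof.
move=> [aa _ _ _]; split.
- by move=> g; rewrite aut0.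
- by move=> g; have [_ _ -> _] := aa g.
- by move=> a b ka kb g; rewrite autB // ka kb.
- by move=> a b ka kb g; have [_ -> _ _] := aa g; rewrite ka kb.
- by move=> a ka _ g; rewrite autV // ka.
Qed.

Lemma level (G : Type) (mul : G -> G -> G) (inv : G -> G) (e : G)
  (h : unitRingType) (act : G -> h -> h) :
  [/\ (forall a b c, mul a (mul b c) = mul (mul a b) c),
      (forall a, mul e a = a /\ mul a e = a) &
      (forall a, mul (inv a) a = e /\ mul a (inv a) = e)] ->
  is_division_ring h ->
  faithful_aut_action mul e act ->
  outer_ext (fixed_set act) ->
  forall (L : set h) n (T : 'I_n -> G),
  is_subfield L -> fixed_set act `<=` L ->
  (forall g, exists i, forall y, L y -> act g y = act (T i) y) ->
  (forall i j, i != j -> exists y, L y /\ act (T i) y != act (T j) y) ->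
  [/\ exists ws, forall y, L y -> inspan (fixed_set act) ws y,
      exists ws, forall y, L y -> inspanr (fixed_set act) ws y &
      forall s, in_Gal (fixed_set act) s -> exists i, forall y, L y -> s y = act (T i) y].
Proof.
move=> Gax dR FA outer L n T [L0 L1 LB LM LV] kL Ta Tb.
have [aK Ka] := act_facts Gax FA.
have [aa ae aM _] := FA.
set k := fixed_set act.
have [i0 Hi0] := Ta e.
have Hi0' : forall y, L y -> act (T i0) y = y by move=> y Ly; rewrite -Hi0 // ae.
have sM : forall i a b, L a -> L b -> act (T i) (a * b) = act (T i) a * act (T i) b.
  by move=> i a b _ _; have [_ -> _ _] := aa (T i).
have s1 : forall i, act (T i) 1 = 1 by move=> i; have [_ _ -> _] := aa (T i).
have Tk : forall i a, k a -> act (T i) a = a by move=> i a ka; exact: ka.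
have ninl : forall m i, i != m -> forall c : h, c != 0 ->
    exists a, L a /\ c * act (T i) a != act (T m) a * c.
  move=> m i im c c0; apply: contrapT => H.
  have H' : forall a, L a -> c * act (T i) a = act (T m) a * c.
    move=> a La; apply: contrapT => H1; apply: H; exists a; split => //; exact/eqP.
  have [y [Ly]] := Tb _ _ im; apply/negP; rewrite negbK; apply/eqP.
  exact: (conj_eq dR outer kL (Tk i) (Tk m) c0 H').
have ninr : forall m i, i != m -> forall c : h, c != 0 ->
    exists a, L a /\ act (T i) a * c != c * act (T m) a.
  move=> m i im c c0; apply: contrapT => H.
  have H' : forall a, L a -> c * act (T m) a = act (T i) a * c.
    move=> a La; apply: contrapT => H1; apply: H; exists a; split => //.
    by apply/eqP => H2; apply: H1.
  have [y [Ly]] := Tb _ _ im; apply/negP; rewrite negbK; apply/eqP.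
  by symmetry; exact: (conj_eq dR outer kL (Tk m) (Tk i) c0 H').
pose Tr z := \sum_(i < n) act (T i) z.
have kTr : forall z, L z -> k (Tr z).
  move=> z Lz g; rewrite /Tr aut_sum //.
  have /choice [p Hp] : forall i, exists j, forall y, L y -> act (mul g (T i)) y = act (T j) y.
    by move=> i; exact: Ta.
  have p_inj : injective p.
    move=> i i' pii'; have [//|ii'] := eqVneq i i'.
    have [y [Ly]] := Tb _ _ ii'; move=> /negP; case; apply/eqP.
    apply: (aut_inj (aa g)); rewrite -!aM !Hp //; by rewrite pii'.
  rewrite [RHS](reindex_inj p_inj); apply: eq_bigr => i _.
  by rewrite -aM Hp.
have [rr [rrL rrd]] := @delta_right h dR n (fun i => act (T i)) L i0 L1 LM sM s1 (ninr i0).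
have span_l : forall y, L y -> y = \sum_(p <- rr) Tr (y * p.2) * p.1.
  move=> y Ly.
  under eq_bigr => p _ do rewrite /Tr mulr_suml.
  rewrite exchange_big /=.
  have E : forall j, \sum_(p <- rr) act (T j) (y * p.2) * p.1 = act (T j) y * (j == i0)%:R.
    move=> j; rewrite -(rrd j) mulr_sumr; apply: eq_big_seq => p pr.
    by rewrite sM ?mulrA //; exact: rrL.
  under eq_bigr => j _ do rewrite E.
  rewrite (bigD1 i0) //= eqxx mulr1 big1 ?addr0 ?Hi0' //.
  by move=> i /negbTE ->; rewrite mulr0.
have deltal : forall m, exists r : seq (h * h), (forall p, p \in r -> L p.2) /\
    forall i, \sum_(p <- r) p.1 * act (T i) p.2 = (i == m)%:R.
  by move=> m; exact: (@delta_exists h dR n (fun i => act (T i)) L m L1 LM sM s1 (ninl m)).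
have [rl [rlL rld]] := deltal i0.
have span_r : forall y, L y -> y = \sum_(p <- rl) p.1 * Tr (p.2 * y).
  move=> y Ly.
  under eq_bigr => p _ do rewrite /Tr mulr_sumr.
  rewrite exchange_big /=.
  have E : forall j, \sum_(p <- rl) p.1 * act (T j) (p.2 * y) = (j == i0)%:R * act (T j) y.
    move=> j; rewrite -(rld j) mulr_suml; apply: eq_big_seq => p pr.
    by rewrite sM ?mulrA //; exact: rlL.
  under eq_bigr => j _ do rewrite E.
  rewrite (bigD1 i0) //= eqxx mul1r big1 ?addr0 ?Hi0' //.
  by move=> i /negbTE ->; rewrite mul0r.
have indep : forall d : 'I_n -> h, (forall y, L y -> \sum_i act (T i) y * d i = 0) ->
    forall m, d m = 0.
  move=> d Hd m; have [r [rL rd]] := deltal m.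
  have -> : d m = \sum_i (i == m)%:R * d i.
    rewrite (bigD1 m) //= eqxx mul1r big1 ?addr0 //.
    by move=> i /negbTE ->; rewrite mul0r.
  under eq_bigr => i _ do rewrite -(rd i) mulr_suml.
  rewrite exchange_big /= big1_seq // => p /andP [_ pr].
  under eq_bigr => i _ do rewrite -mulrA.
  by rewrite -mulr_sumr Hd ?mulr0 //; exact: rL.
split.
- exists [seq p.1 | p <- rr] => y Ly; rewrite (span_l y Ly).
  by apply: sum_inspan => p pr; apply: kTr; apply: LM => //; exact: rrL.
- exists [seq p.1 | p <- rl] => y Ly; rewrite inspanrE (span_r y Ly).
  apply: (@sum_inspan h^c k _ rl (fun p => Tr (p.2 * y)) (fun p => p.1)).
  by move=> p pr; apply: kTr; apply: LM => //; exact: rlL.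
move=> s [sa sk].
have [sD sMs s1s _] := sa.
pose c i := \sum_(p <- rr) act (T i) p.2 * s p.1.
have sy : forall y, L y -> s y = \sum_i act (T i) y * c i.
  move=> y Ly; rewrite {1}(span_l y Ly) aut_sum //.
  transitivity (\sum_(p <- rr) Tr (y * p.2) * s p.1).
    apply: eq_big_seq => p pr; rewrite sMs sk //; apply: kTr; apply: LM => //; exact: rrL.
  rewrite /c /Tr; under eq_bigr => p _ do rewrite mulr_suml.
  rewrite exchange_big /=; apply: eq_bigr => i _; rewrite mulr_sumr; apply: eq_big_seq => p pr.
  by rewrite sM ?mulrA //; exact: rrL.
have ceq : forall i a, L a -> act (T i) a * c i = c i * s a.
  move=> i a La; apply/eqP; rewrite -subr_eq0; apply/eqP; move: i.
  apply: indep => y Ly.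
  have E1 : \sum_i act (T i) y * (act (T i) a * c i) = s (y * a).
    by rewrite sy; [apply: eq_bigr => i _; rewrite sM ?mulrA|apply: LM].
  have E2 : \sum_i act (T i) y * (c i * s a) = s (y * a).
    by rewrite sMs (sy y Ly) mulr_suml; apply: eq_bigr => i _; rewrite mulrA.
  by rewrite (eq_bigr _ (fun i _ => mulrBr _ _ _)) sumrB E1 E2 subrr.
have [i ci] : exists i, c i != 0.
  apply: contrapT => H.
  have E := sy 1 L1; rewrite s1s in E.
  have : (1 : h) == 0.
    rewrite {1}E big1 // => i _.
    have -> : c i = 0 by apply: contrapT => H1; apply: H; exists i; exact/eqP.
    by rewrite mulr0.
  by rewrite oner_eq0.
exists i; apply: (conj_eq dR outer kL sk (Tk i) ci) => a La.
by rewrite ceq.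
Qed.

Lemma coset_open (G : topologicalType) (mul : G -> G -> G) (inv : G -> G) (e : G)
  (h : unitRingType) (act : G -> h -> h) :
  is_profinite_group mul inv e -> faithful_aut_action mul e act ->
  (forall x : h, open (stabilizer act x)) ->
  forall x g, open [set y | act y x = act g x].
Proof.
move=> [Gax [mc _ _ _ _]] FA So x g.
have [aK Ka] := act_facts Gax FA.
have [_ _ aM _] := FA.
have -> : [set y | act y x = act g x] = (fun y => mul (inv g) y) @^-1` stabilizer act x.
  apply/seteqP; split => y /=; rewrite /stabilizer /= aM.
    by move=> ->; rewrite aK.
  by move=> H1; rewrite -(Ka g (act y x)) H1.
apply: open_comp (So x) => y _; exact: transl_cont.
Qed.

Lemma left_findim_of (R : unitRingType) (dR : is_division_ring R) (k V : set R) ws :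
  is_subfield k -> V 0 -> (forall a b, V a -> V b -> V (a - b)) ->
  (forall c a, k c -> V a -> V (c * a)) ->
  (forall y, V y -> inspan k ws y) -> left_findim k V.
Proof.
move=> ks V0 VB VM Vs.
have [s [sV ss]] := sub_findim dR ks V0 VB VM Vs.
exists s; split => // y Vy; apply: inspan_sum (ss y Vy).
by case: ks.
Qed.

Lemma right_findim_of (R : unitRingType) (dR : is_division_ring R) (k V : set R) ws :
  is_subfield k -> V 0 -> (forall a b, V a -> V b -> V (a - b)) ->
  (forall c a, k c -> V a -> V (a * c)) ->
  (forall y, V y -> inspanr k ws y) -> right_findim k V.
Proof.
move=> ks V0 VB VM Vs.
apply: (@left_findim_of (R^c) (divR_c dR) k V ws (subfield_c ks) V0 VB VM).
by move=> y Vy; rewrite -inspanrE; exact: Vs.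
Qed.

Theorem lemma3 (G : topologicalType) (mul : G -> G -> G) (inv : G -> G) (e : G)
  (h : unitRingType) (act : G -> h -> h) :
  is_profinite_group mul inv e ->
  is_division_ring h ->
  faithful_aut_action mul e act ->
  (forall x : h, open (stabilizer act x)) ->
  outer_ext (fixed_set act) ->
  [/\ algebraic_ext (fixed_set act),
      galois_ext (fixed_set act) &
      (forall s : h -> h, in_Gal (fixed_set act) s <-> exists g : G, s = act g)].
Proof.
move=> PG dR FA So outer.
have [Gax [_ _ Gc _ _]] := PG.
have [aa ae aM _] := FA.
set k := fixed_set act.
have ks : is_subfield k by exact: (@fixed_subfield G mul e h dR act FA).
have lev : forall X : seq h, exists L : set h,
  [/\ (forall x, x \in X -> L x), is_subfield L, k `<=` L,
      (exists ws, forall y, L y -> inspan k ws y) /\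
      (exists ws, forall y, L y -> inspanr k ws y) &
      forall s, in_Gal k s -> exists g, forall y, L y -> s y = act g y].
  move=> X.
  have [O [XO Oc]] := orbit_closure PG FA So X.
  have [n [T [Ta Tb]]] := reps Gax FA Oc.
  have Ls : is_subfield (Lset act O).
    split.
    - by move=> s _; rewrite aut0.
    - by move=> s _; have [_ _ -> _] := aa s.
    - by move=> a b La Lb s Hs; rewrite autB // La // Lb.
    - by move=> a b La Lb s Hs; have [_ -> _ _] := aa s; rewrite La // Lb.
    - by move=> a La _ s Hs; rewrite autV // La.
  have kL : k `<=` Lset act O by move=> y ky s _; exact: ky.
  have [l1 l2 l3] := level Gax dR FA outer Ls kL Ta Tb.
  exists (Lset act O); split => //.
    by move=> x xX s Hs; apply: Hs; exact: XO.
  by move=> s sG; have [i Hi] := l3 s sG; exists (T i).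
split.
- move=> x; have [L [XL Ls kL [[ws1 H1] [ws2 H2]] _]] := lev [:: x].
  have VL : forall y, gen_subfield k x y -> L y.
    by move=> y; apply => //; apply: XL; rewrite mem_seq1.
  have V0 : gen_subfield k x 0 by move=> S [] *.
  have VB : forall a b, gen_subfield k x a -> gen_subfield k x b -> gen_subfield k x (a - b).
    by move=> a b Va Vb S Ss kS Sx; case: (Ss) => _ _ SB _ _; apply: SB; [apply: Va|apply: Vb].
  split.
    apply: (left_findim_of dR ks V0 VB) => [c a kc Va S Ss kS Sx|y /VL]; last exact: H1.
    by case: (Ss) => _ _ _ SM _; apply: SM; [apply: kS|apply: Va].
  apply: (right_findim_of dR ks V0 VB) => [c a kc Va S Ss kS Sx|y /VL]; last exact: H2.
  by case: (Ss) => _ _ _ SM _; apply: SM; [apply: Va|apply: kS].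
- apply/seteqP; split => y /=.
    by move=> Hy g; apply: Hy; split => // a ka; exact: ka.
  by move=> ky s [_ sk]; exact: sk.
move=> s; split; last first.
  by move=> [g ->]; split => // a ka; exact: ka.
move=> sG.
have := @fip G h setT (fun x => [set g | act g x = s x]) Gc.
case.
- by exists 0.
- move=> x _.
  have -> : [set g | act g x = s x] = ~` \bigcup_(g0 in [set g0 | act g0 x <> s x]) [set g | act g x = act g0 x].
    apply/seteqP; split => g /=.
      by move=> Hg [g0 /= Hg0 Hgg0]; apply: Hg0; rewrite -Hgg0.
    by move=> Hg; apply: contrapT => Hn; apply: Hg; exists g.
  apply: open_closedC; apply: bigcup_open => g0 _; exact: (coset_open PG FA So).
- move=> D' _.
  have [L [XL _ _ _ LG]] := lev (D' : seq h).
  have [g Hg] := LG s sG.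
  by exists g => x /= xD; rewrite Hg //; apply: XL.
move=> g Hg; exists g; apply/funext => x; symmetry; exact: Hg.
Qed.
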